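(* Let $d\ge 3$, let $\mathcal M$ be a model of $\mathrm{PQM}_d$, and let $\varphi(x)$ be an $\mathcal L_d$-formula in the single free variable $x$ which is a finite conjunction of literals, each of the form $[t(x):p]$ or $\neg[t(x):p]$ with $p\in\mathbb H_d$ and $t(x)$ a term obtained from $x$ by applying finitely many function symbols $u_U$, $\pi_q$. If $\mathcal M\models\exists x\,\varphi(x)$, then $\mathcal H_d\models\exists x\,\varphi(x)$.
   Context: Notation. For $d\ge 1$, $\mathbb H_d$ is the set of complex linear subspaces of $\mathbb C^d$, ordered by inclusion $\le$, with $\top=\mathbb C^d$, $\bot=\{0\}$, $p^\bot$ the orthogonal complement, $p\wedge q=p\cap q$ and $p\vee q=p+q$. $\mathbb U_d$ is the set of unitary operators on $\mathbb C^d$, and for $U\in\mathbb U_d$, $p\in\mathbb H_d$, $U(p)=\{Uv: v\in p\}$. The Sasaki projection is $p\,\&\,q := q\cap(q^\bot+p)$. Subspaces $p,q$ are compatible iff $p=(p\wedge q)\vee(p\wedge q^\bot)$. Language $\mathcal L_d$: a first-order language without equality and without constants, having a unary function symbol $u_U$ for each $U\in\mathbb U_d$, a unary function symbol $\pi_q$ for each $q\in\mathbb H_d$, and a unary relation symbol $[\,\cdot:p]$ for each $p\in\mathbb H_d$. Theory $\mathrm{PQM}_d$ (over $\mathcal L_d$) has the following axioms, for all $p,q\in\mathbb H_d$ and $U\in\mathbb U_d$: ($\neg\bot$) $\exists x\,\neg[x:\bot]$; ($\top$) $\forall x\,[x:\top]$; ($\le$) if $p\le q$: $\forall x\,([x:p]\to[x:q])$;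 ($\wedge$) if $p,q$ are compatible: $\forall x\,([x:p]\wedge[x:q]\to[x:p\wedge q])$; ($\pi_i$) $\forall x\,([x:p]\to[\pi_q(x):p\,\&\,q])$; ($\pi_c$) if $p\le q$: $\forall x\,([\pi_p(\pi_q(x)):\bot]\to[\pi_p(x):\bot])$; ($\pi_\bot$) $\forall x\,([\pi_q(x):\bot]\to[x:q^\bot])$; ($u_i$) $\forall x\,([x:p]\to[u_U(x):U(p)])$; ($u_e$) $\forall x\,([u_U(x):p]\to[x:U^{-1}(p)])$. Hilbert model $\mathcal H_d$: the $\mathcal L_d$-structure with domain $\mathbb H_d$, $u_U^{\mathcal H_d}(x)=U(x)$, $\pi_q^{\mathcal H_d}(x)=x\,\&\,q$, and $[x:p]^{\mathcal H_d}$ holds iff $x\le p$. *)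

(* Defs.v *)
From HB Require Import structures.
From mathcomp Require Import all_boot all_algebra.
From mathcomp Require Import reals complex.
From Stdlib Require List.
Import GRing.Theory Num.Theory.

Set Implicit Arguments.
Unset Strict Implicit.
Unset Printing Implicit Defensive.

Local Open Scope ring_scope.

Section Hilbert.
Variables (R : realType) (d : nat).

Definition vec := 'cV[R[i]]_d.

Definition dotp (v w : vec) : R[i] := \sum_(k < d) (v k 0)^* * w k 0.

Definition is_subspace (S : vec -> Prop) :=
  [/\ S 0, (forall v w, S v -> S w -> S (v + w))
    & (forall (c : R[i]) v, S v -> S (c *: v))].

Record subspace := Subspace { sset :> vec -> Prop; sset_sub : is_subspace sset }.

Definition adj (U : 'M[R[i]]_d) : 'M[R[i]]_d := (map_mx Num.conj U)^T.
Definition is_unitary (U : 'M[R[i]]_d) := adj U *m U = 1%:M /\ U *m adj U = 1%:M.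
Record unitary := Unitary { umx :> 'M[R[i]]_d; umx_unitary : is_unitary umx }.

Definition sle (p q : subspace) : Prop := forall v, p v -> q v.

Lemma top_sub : is_subspace (fun _ => True). Proof. by []. Qed.
Definition stop : subspace := Subspace top_sub.

Lemma bot_sub : is_subspace (fun v => v = 0).
Proof.
split=> //; first by move=> v w -> ->; rewrite addr0.
by move=> c v ->; rewrite scaler0.
Qed.
Definition sbot : subspace := Subspace bot_sub.

Lemma perp_sub (p : subspace) : is_subspace (fun v => forall w, p w -> dotp w v = 0).
Proof.
split.
- by move=> w _; rewrite /dotp big1 // => k _; rewrite mxE mulr0.
- move=> v v' Hv Hv' w pw; rewrite /dotp.
  rewrite (eq_bigr (fun k : 'I_d => (w k 0)^* * v k 0 + (w k 0)^* * v' k 0)).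
    by rewrite big_split /= -!/(dotp _ _) Hv // Hv' // addr0.
  by move=> k _; rewrite mxE mulrDr.
- move=> c v Hv w pw; rewrite /dotp.
  rewrite (eq_bigr (fun k : 'I_d => c * ((w k 0)^* * v k 0))).
    by rewrite -mulr_sumr -/(dotp _ _) Hv // mulr0.
  by move=> k _; rewrite mxE mulrCA.
Qed.
Definition sperp (p : subspace) : subspace := Subspace (perp_sub p).

Lemma meet_sub (p q : subspace) : is_subspace (fun v => p v /\ q v).
Proof.
case: p q => [p [p0 pD pZ]] [q [q0 qD qZ]]; split=> /=.
- by [].
- by move=> v w [? ?] [? ?]; split; [apply: pD | apply: qD].
- by move=> c v [? ?]; split; [apply: pZ | apply: qZ].
Qed.
Definition smeet (p q : subspace) : subspace := Subspace (meet_sub p q).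

Lemma join_sub (p q : subspace) :
  is_subspace (fun v => exists a b, [/\ p a, q b & v = a + b]).
Proof.
case: p q => [p [p0 pD pZ]] [q [q0 qD qZ]]; split=> /=.
- by exists 0, 0; rewrite addr0.
- move=> v w [a [b [pa qb ->]]] [a' [b' [pa' qb' ->]]].
  exists (a + a'), (b + b'); split; [exact: pD | exact: qD |].
  by rewrite addrACA.
- move=> c v [a [b [pa qb ->]]]; exists (c *: a), (c *: b).
  by split; [exact: pZ | exact: qZ | rewrite scalerDr].
Qed.
Definition sjoin (p q : subspace) : subspace := Subspace (join_sub p q).

Definition sasaki (p q : subspace) : subspace := smeet q (sjoin (sperp q) p).

Definition compatible (p q : subspace) : Prop :=
  p = sjoin (smeet p q) (smeet p (sperp q)).

Lemma image_sub (U : 'M[R[i]]_d) (p : subspace) :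
  is_subspace (fun w => exists v, p v /\ w = U *m v).
Proof.
case: p => [p [p0 pD pZ]]; split=> /=.
- by exists 0; rewrite mulmx0.
- by move=> w w' [v [pv ->]] [v' [pv' ->]]; exists (v + v'); rewrite mulmxDr; split=> //; apply: pD.
- by move=> c w [v [pv ->]]; exists (c *: v); rewrite scalemxAr; split=> //; apply: pZ.
Qed.
Definition simage (U : unitary) (p : subspace) : subspace := Subspace (image_sub U p).

Lemma adjK (U : 'M[R[i]]_d) : adj (adj U) = U.
Proof. by apply/matrixP => i j; rewrite !mxE conjCK. Qed.

Lemma adj_unitary (U : unitary) : is_unitary (adj U).
Proof. by case: U => U [h1 h2]; rewrite /is_unitary adjK. Qed.
Definition uinv (U : unitary) : unitary := Unitary (adj_unitary U).

Inductive term :=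
| TVar : term
| TU : unitary -> term -> term
| TPi : subspace -> term -> term.

Inductive literal :=
| LPos : term -> subspace -> literal
| LNeg : term -> subspace -> literal.

Definition conj_formula := seq literal.

Record structure := Structure {
  carrier : Type;
  u_fun : unitary -> carrier -> carrier;
  pi_fun : subspace -> carrier -> carrier;
  rel : carrier -> subspace -> Prop
}.

Fixpoint eval_term (M : structure) (t : term) (x : carrier M) : carrier M :=
  match t with
  | TVar => x
  | TU U t' => @u_fun M U (@eval_term M t' x)
  | TPi q t' => @pi_fun M q (@eval_term M t' x)
  end.

Definition sat_literal (M : structure) (l : literal) (x : carrier M) : Prop :=
  match l with
  | LPos t p => @rel M (@eval_term M t x) p
  | LNeg t p => ~ @rel M (@eval_term M t x) p
  end.

Definition sat_conj (M : structure) (phi : conj_formula) (x : carrier M) : Prop :=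
  forall l, List.In l phi -> @sat_literal M l x.

Definition sat_exists (M : structure) (phi : conj_formula) : Prop :=
  exists x : carrier M, @sat_conj M phi x.

Record PQM (M : structure) : Prop := {
  ax_nbot : exists x : carrier M, ~ rel x sbot;
  ax_top : forall x : carrier M, rel x stop;
  ax_le : forall p q, sle p q -> forall x : carrier M, rel x p -> rel x q;
  ax_meet : forall p q, compatible p q ->
    forall x : carrier M, rel x p -> rel x q -> rel x (smeet p q);
  ax_pi_i : forall p q (x : carrier M), rel x p -> rel (pi_fun q x) (sasaki p q);
  ax_pi_c : forall p q, sle p q ->
    forall x : carrier M, rel (pi_fun p (pi_fun q x)) sbot -> rel (pi_fun p x) sbot;
  ax_pi_bot : forall q (x : carrier M), rel (pi_fun q x) sbot -> rel x (sperp q);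
  ax_u_i : forall p U (x : carrier M), rel x p -> rel (u_fun U x) (simage U p);
  ax_u_e : forall p U (x : carrier M), rel (u_fun U x) p -> rel x (simage (uinv U) p)
}.

Definition Hilbert_model : structure :=
  @Structure subspace (fun U x => simage U x) (fun q x => sasaki x q) sle.

End Hilbert.

(* Main.v *)
From Pilot Require Import Defs.
From HB Require Import structures.
From mathcomp Require Import all_boot all_algebra.
From mathcomp Require Import all_order reals complex.
From mathcomp Require Import ring lra.
From Stdlib Require Import Classical ProofIrrelevance FunctionalExtensionality PropExtensionality.
Import Order.TTheory GRing.Theory Num.Theory.
Set Implicit Arguments. Unset Strict Implicit. Unset Printing Implicit Defensive.
Local Open Scope ring_scope.

Section Lin.
Variables (R : realType) (d : nat).
Local Notation vec := (vec R d).
Local Notation C := R[i].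
Local Notation subspace := (subspace R d).

Lemma dotpDr (u v w : vec) : dotp u (v + w) = dotp u v + dotp u w.
Proof. by rewrite /dotp -big_split; apply: eq_bigr => k _; rewrite mxE mulrDr. Qed.
Lemma dotpZr (u : vec) (c : C) (v : vec) : dotp u (c *: v) = c * dotp u v.
Proof. by rewrite /dotp mulr_sumr; apply: eq_bigr => k _; rewrite mxE mulrCA. Qed.
Lemma dotpC (u v : vec) : dotp v u = (dotp u v)^*.
Proof. by rewrite /dotp rmorph_sum; apply: eq_bigr => k _; rewrite rmorphM /= conjCK mulrC. Qed.
Lemma dotpDl (u v w : vec) : dotp (v + w) u = dotp v u + dotp w u.
Proof. by rewrite dotpC dotpDr rmorphD /= -!dotpC. Qed.
Lemma dotpZl (u : vec) (c : C) (v : vec) : dotp (c *: v) u = c^* * dotp v u.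
Proof. by rewrite dotpC dotpZr rmorphM /= -dotpC. Qed.
Lemma dotp0r (u : vec) : dotp u 0 = 0.
Proof. by rewrite -(scale0r 0) dotpZr mul0r. Qed.
Lemma dotp0l (u : vec) : dotp 0 u = 0.
Proof. by rewrite dotpC dotp0r rmorph0. Qed.
Lemma dotpNr (u v : vec) : dotp u (- v) = - dotp u v.
Proof. by rewrite -scaleN1r dotpZr mulN1r. Qed.
Lemma dotpNl (u v : vec) : dotp (- v) u = - dotp v u.
Proof. by rewrite dotpC dotpNr rmorphN /= -dotpC. Qed.
Lemma dotpBr (u v w : vec) : dotp u (v - w) = dotp u v - dotp u w.
Proof. by rewrite dotpDr dotpNr. Qed.
Lemma dotpBl (u v w : vec) : dotp (v - w) u = dotp v u - dotp w u.
Proof. by rewrite dotpDl dotpNl. Qed.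
Lemma dotp_ge0 (v : vec) : 0 <= dotp v v.
Proof. by apply: sumr_ge0 => k _; rewrite mulrC mul_conjC_ge0. Qed.
Lemma dotp_eq0 (v : vec) : dotp v v = 0 -> v = 0.
Proof.
move=> h; apply/matrixP => i j; rewrite (ord1 j) mxE.
have := @psumr_eq0P _ _ _ (fun k => (v k 0)^* * v k 0) _ h i isT.
by move/(_ (fun k _ => ltac:(by rewrite mulrC mul_conjC_ge0)))/eqP; rewrite mulrC mul_conjC_eq0 => /eqP.
Qed.
Lemma dotp_real (v : vec) : (dotp v v)^* = dotp v v.
Proof. by rewrite -dotpC. Qed.

Lemma subspace_ext (p q : subspace) : (forall v, p v <-> q v) -> p = q.
Proof.
case: p q => [p hp] [q hq] /= h.
have e : p = q by apply: functional_extensionality => v; apply: propositional_extensionality.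
subst q; congr Subspace; apply: proof_irrelevance.
Qed.
Lemma ss0 (p : subspace) : p 0. Proof. by case: p => p []. Qed.
Lemma ssD (p : subspace) v w : p v -> p w -> p (v + w). Proof. by case: p => p [] /=; auto. Qed.
Lemma ssZ (p : subspace) c v : p v -> p (c *: v). Proof. by case: p => p [] /=; auto. Qed.
Lemma ssN (p : subspace) v : p v -> p (- v). Proof. by move=> h; rewrite -scaleN1r; apply: ssZ. Qed.
Lemma ssB (p : subspace) v w : p v -> p w -> p (v - w). Proof. by move=> *; apply: ssD => //; apply: ssN. Qed.

Fixpoint inspan (L : seq vec) (v : vec) : Prop :=
  match L with [::] => v = 0 | u :: L' => exists c : C, inspan L' (v - c *: u) end.

Lemma inspan_sub L : is_subspace (inspan L).
Proof.
elim: L => [|u L [h0 hD hZ]] /=.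
  split => //; first by move=> v w -> ->; rewrite addr0.
  by move=> c v ->; rewrite scaler0.
split.
- by exists 0; rewrite scale0r subr0.
- move=> v w [a ha] [b hb]; exists (a + b).
  have := hD _ _ ha hb; congr inspan.
  by rewrite scalerDl opprD addrACA.
- move=> c v [a ha]; exists (c * a); have := hZ c _ ha; congr inspan.
  by rewrite scalerBr scalerA.
Qed.
Definition sspan L : subspace := Subspace (inspan_sub L).

Definition orthL (L : seq vec) (t : vec) := forall u, u \in L -> dotp u t = 0.

Lemma orthL_span L t : orthL L t -> forall v, inspan L v -> dotp v t = 0.
Proof.
elim: L => [|u L IH] /= h v; first by move=> ->; rewrite dotp0l.
case=> c hc.
have -> : v = (v - c *: u) + c *: u by rewrite subrK.
rewrite dotpDl dotpZl (h u (mem_head _ _)) mulr0 addr0.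
by apply: IH hc => w hw; apply: h; rewrite in_cons hw orbT.
Qed.

Lemma inspan_mem L u : u \in L -> inspan L u.
Proof.
elim: L => [//|w L IH]; rewrite in_cons => /orP [/eqP ->|hu] /=.
  by exists 1; rewrite scale1r subrr; apply: (ss0 (sspan L)).
by exists 0; rewrite scale0r subr0; apply: IH.
Qed.

Lemma span_in (S : subspace) L : (forall w, w \in L -> S w) -> forall v, inspan L v -> S v.
Proof.
elim: L => [|u L IH] /= h v; first by move=> ->; apply: ss0.
case=> c hc; have -> : v = (v - c *: u) + c *: u by rewrite subrK.
apply: ssD; last by apply: ssZ; apply: h; apply: mem_head.
by apply: IH hc => w hw; apply: h; rewrite in_cons hw orbT.
Qed.

Lemma decomp L v : exists s t, [/\ inspan L s, orthL L t & v = s + t].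
Proof.
elim: L v => [|u L IH] v.
  by exists 0, v; split => //; rewrite ?add0r // => w; rewrite in_nil.
have [u1 [u2 [hu1 hu2 eu]]] := IH u.
have [s [t [hs ht ev]]] := IH v.
pose k := dotp u2 t / dotp u2 u2.
have hk : dotp u2 t - k * dotp u2 u2 = 0.
  have [/eqP z|nz] := boolP (dotp u2 u2 == 0).
    by rewrite (dotp_eq0 z) dotp0l dotp0r mulr0 subrr.
  by rewrite /k divfK // subrr.
have htL : orthL L (t - k *: u2).
  by move=> w hw; rewrite dotpBr dotpZr ht // hu2 // mulr0 subrr.
exists (s + k *: u2), (t - k *: u2); split.
- exists k; have -> : s + k *: u2 - k *: u = s - k *: u1.
    by rewrite eu scalerDr opprD addrACA subrr addr0.
  exact: (ssB (p := sspan L)) hs ((ssZ (p := sspan L)) _ _ hu1).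
- move=> w; rewrite in_cons => /orP [/eqP ->|hw]; last exact: htL.
  rewrite eu dotpDl (orthL_span htL hu1) add0r dotpBr dotpZr; exact: hk.
- by rewrite ev addrACA subrr addr0.
Qed.

Lemma inspan_memv (L : seq vec) v : inspan L v -> (v \in <<L>>)%VS.
Proof.
elim: L v => [|u L IH] v /=; first by move=> ->; rewrite mem0v.
case=> c /IH h; rewrite span_cons.
have -> : v = c *: u + (v - c *: u) by rewrite addrC subrK.
by apply: memv_add => //; apply: memvZ; apply: memv_line.
Qed.

Lemma memv_inspan (L : seq vec) v : (v \in <<L>>)%VS -> inspan L v.
Proof.
elim: L v => [|u L IH] v /=; first by rewrite span_nil memv0 => /eqP.
rewrite span_cons => /memv_addP [a /vlineP [c ->] [b /IH hb ->]].
by exists c; rewrite addrAC subrr add0r.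
Qed.

Lemma orth_free (L : seq vec) :
  pairwise (fun u w => dotp u w == 0) L -> all (fun u => u != 0) L -> free L.
Proof.
elim: L => [|u L IH] /=; first by rewrite nil_free.
case/andP => hu hL /andP [nu nL]; rewrite free_cons IH // andbT.
apply/negP => /memv_inspan hv; move/negP: nu; apply; apply/eqP; apply: dotp_eq0.
apply: (orthL_span _ hv) => w hw.
by move/allP: hu => /(_ w hw) /eqP h; rewrite dotpC h conjC0.
Qed.

Lemma orth_size (L : seq vec) :
  pairwise (fun u w => dotp u w == 0) L -> all (fun u => u != 0) L -> (size L <= d)%N.
Proof.
move=> h1 h2; have /eqP <- := orth_free h1 h2.
by apply: leq_trans (dimvS (subvf _)) _; rewrite dimvf dim_matrix mulr1.
Qed.

Definition porth (L : seq vec) := pairwise (fun u w => dotp u w == 0) L.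

Lemma fin_span (S : subspace) : exists L, porth L /\ forall v, S v <-> inspan L v.
Proof.
apply: NNPP => H.
have key : forall k, exists L, [/\ size L = k, porth L, all (fun u => u != 0) L
                                  & forall w, w \in L -> S w].
  elim=> [|k [L [sz hp hn hS]]]; first by exists [::].
  have sub : forall v, inspan L v -> S v := span_in hS.
  have [v [Sv nv]] : exists v, S v /\ ~ inspan L v.
    apply: NNPP => H2; apply: H; exists L; split => // v; split; last exact: sub.
    by move=> Sv; apply: NNPP => nv; apply: H2; exists v.
  have [s [t [hs ht ev]]] := decomp L v.
  have tS : S t.
    have -> : t = v - s by rewrite ev addrAC subrr add0r.
    by apply: ssB => //; exact: sub.
  have tn : t != 0 by apply/eqP => t0; apply: nv; rewrite ev t0 addr0.
  exists (t :: L); split => /=.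
  - by rewrite sz.
  - move: hp; rewrite /porth /= => -> ; rewrite andbT; apply/allP => w hw; by rewrite dotpC ht // conjC0.
  - by rewrite tn hn.
  - by move=> w; rewrite in_cons => /orP [/eqP ->|]; [|exact: hS].
have [L [sz hp hn _]] := key d.+1.
by have := orth_size hp hn; rewrite sz ltnn.
Qed.

Lemma sdecomp (S : subspace) v : exists s t, [/\ S s, sperp S t & v = s + t].
Proof.
have [L [_ hL]] := fin_span S; have [s [t [hs ht ev]]] := decomp L v.
exists s, t; split => //; first by apply/hL.
by move=> w /hL hw; exact: orthL_span ht _ hw.
Qed.

Lemma perp_self (S : subspace) v : S v -> sperp S v -> v = 0.
Proof. by move=> h1 h2; apply: dotp_eq0; apply: h2. Qed.

Lemma perpperp (S : subspace) v : sperp (sperp S) v -> S v.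
Proof.
move=> h; have [s [t [hs ht ev]]] := sdecomp S v.
have h1 : dotp t v = 0 by apply: h.
have h2 : dotp t s = 0 by by rewrite dotpC ht // conjC0.
have e2 : t = v - s by rewrite ev addrAC subrr add0r.
have : dotp t t = 0 by rewrite {2}e2 dotpBr h1 h2 subrr.
by move/dotp_eq0 => t0; rewrite ev t0 addr0.
Qed.

Lemma sline_sub (u : vec) : is_subspace (fun v => exists c : C, v = c *: u).
Proof.
split; first by exists 0; rewrite scale0r.
  by move=> v w [a ->] [b ->]; exists (a + b); rewrite scalerDl.
by move=> c v [a ->]; exists (c * a); rewrite scalerA.
Qed.
Definition sline u : subspace := Subspace (sline_sub u).

End Lin.

Section Perp3.
Variables (R : realType) (d : nat).
Local Notation vec := (vec R d).
Lemma exists_perp (u v : vec) : (3 <= d)%N ->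
  exists e : vec, [/\ e != 0, dotp u e = 0 & dotp v e = 0].
Proof.
move=> hd; apply: NNPP => H.
have all_in : forall w : vec, inspan [:: u; v] w.
  move=> w; have [s [t [hs ht ew]]] := decomp [:: u; v] w.
  have t0 : t = 0.
    apply: NNPP => tn; apply: H; exists t; split.
    - by apply/eqP.
    - by apply: ht; rewrite mem_head.
    - by apply: ht; rewrite in_cons mem_head orbT.
  by rewrite ew t0 addr0.
have : (fullv <= <<[:: u; v]>>)%VS by apply/subvP => w _; apply: inspan_memv.
move/dimvS; rewrite dimvf dim_matrix mulr1 => h.
have := leq_trans h (dim_span _); rewrite /= => h2.
by have := leq_trans hd h2.
Qed.
End Perp3.

Section RC.
Variable R : realType.
Definition rc (x : R) : R[i] := (x%:C)%C.
Lemma rc_conj x : (rc x)^* = rc x. Proof. exact: conjc_real. Qed.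
Lemma rcD x y : rc (x + y) = rc x + rc y. Proof. by rewrite /rc rmorphD. Qed.
Lemma rcM x y : rc (x * y) = rc x * rc y. Proof. by rewrite /rc rmorphM. Qed.
Lemma rc0 : rc 0 = 0. Proof. by rewrite /rc rmorph0. Qed.
Lemma rc_eq0 x : (rc x == 0) = (x == 0).
Proof. by rewrite -rc0; apply/eqP/eqP => [/complexI|->]. Qed.
Lemma rc_ge0 (x : R[i]) : 0 <= x -> exists r : R, x = rc r /\ 0 <= r.
Proof.
move=> h; exists (complex.Re x); split; first by rewrite /rc RRe_real // ger0_real.
by move: h; rewrite lecE => /andP [_]; rewrite /=.
Qed.
End RC.

Section PQ.
Variables (R : realType) (d : nat) (M : structure R d) (hM : PQM M).
Local Notation vec := (vec R d).
Local Notation C := R[i].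
Local Notation subspace := (subspace R d).
Local Notation X := (carrier M).
Local Notation rl := Pilot.Defs.rel.

Lemma weak (x : X) (p q : subspace) : (forall v, p v -> q v) -> rl x p -> rl x q.
Proof. by move=> h; apply: (ax_le hM). Qed.

Lemma orth_bot (x : X) (p q : subspace) :
  (forall v w, p v -> q w -> dotp v w = 0) -> rl x p -> rl x q -> rl x (sbot R d).
Proof.
move=> h hp hq.
have hc : compatible p q.
  apply: subspace_ext => v; split.
    move=> pv; exists 0, v; split => //=.
    - by split; apply: ss0.
    - by split => // w qw; rewrite dotpC h // conjC0.
    - by rewrite add0r.
  by case=> a [b [[pa _] [pb _] ->]]; apply: ssD.
have := ax_meet hM hc hp hq; apply: weak => v /= [pv qv].
by apply: dotp_eq0; apply: h.
Qed.

Lemma sasaki_line (n a : vec) v : sasaki (sline a) (sperp (sline n)) v ->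
   exists c : C, v = c *: (a - (dotp n a / dotp n n) *: n).
Proof.
case=> vq [s [w [hs [c ew] ev]]]; subst w.
have [mu es] : sline n s := perpperp hs.
subst s.
have h0 : dotp n v = 0 by apply: vq; exists 1; rewrite scale1r.
have [nz|nnz] := eqVneq (dotp n n) 0.
  move: (dotp_eq0 nz) ev => -> ->; exists c.
  by rewrite dotp0l mul0r scale0r subr0 scaler0 add0r.
have hmu : mu = - (c * (dotp n a / dotp n n)).
  move: h0; rewrite ev dotpDr !dotpZr => /eqP; rewrite addr_eq0 => /eqP h.
  apply: (mulIf nnz); rewrite h; field; exact: nnz.
exists c; rewrite ev hmu scalerBr scalerA scaleNr addrC //.
Qed.

Lemma cone (z : X) (a b n : vec) : n != 0 ->
  dotp a b * dotp n n = dotp a n * dotp n b ->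
  rl z (sline a) -> rl z (sline b) -> rl z (sline n).
Proof.
move=> nz hc ha hb.
set q := sperp (sline n).
have nnz : dotp n n != 0 by apply/eqP => /dotp_eq0 /eqP; apply/negP.
pose Pa := a - (dotp n a / dotp n n) *: n.
pose Pb := b - (dotp n b / dotp n n) *: n.
have o : dotp Pa Pb = 0.
  rewrite /Pa /Pb !dotpBl !dotpBr !dotpZl !dotpZr fmorph_div /= -dotpC dotp_real.
  have -> : dotp a b = dotp a n * dotp n b / dotp n n.
    by apply: (mulIf nnz); rewrite hc divfK.
  field; exact: nnz.
have h1 : rl (pi_fun q z) (sasaki (sline a) q) by apply: (ax_pi_i hM).
have h2 : rl (pi_fun q z) (sasaki (sline b) q) by apply: (ax_pi_i hM).
have h1' : rl (pi_fun q z) (sline Pa) by apply: weak h1 => v /sasaki_line.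
have h2' : rl (pi_fun q z) (sline Pb) by apply: weak h2 => v /sasaki_line.
have hbot : rl (pi_fun q z) (sbot R d).
  apply: orth_bot h1' h2' => v w [c ->] [c' ->].
  by rewrite dotpZl dotpZr o !mulr0.
have := ax_pi_bot hM hbot; apply: weak => v; exact: perpperp.
Qed.

Ltac dexp := rewrite ?dotpDl ?dotpDr ?dotpBl ?dotpBr ?dotpNl ?dotpNr ?dotpZl ?dotpZr ?rc_conj.

Lemma line_orth_bot (z : X) (n1 n2 : vec) : dotp n1 n2 = 0 ->
  rl z (sline n1) -> rl z (sline n2) -> rl z (sbot R d).
Proof.
move=> o h1 h2; apply: orth_bot h1 h2 => v w [c ->] [c' ->].
by rewrite dotpZl dotpZr o !mulr0.
Qed.

Lemma nz_of_dotp (e n : vec) : dotp e n != 0 -> n != 0.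
Proof. by apply: contraNneq => ->; rewrite dotp0r. Qed.

Lemma RR_small (z : X) (a b e : vec) (A g E : R) :
  dotp a a = rc A -> dotp b b = rc A -> dotp a b = rc g -> dotp e e = rc E ->
  dotp a e = 0 -> dotp b e = 0 -> 0 < E -> 0 < g -> 3 * g < A ->
  rl z (sline a) -> rl z (sline b) -> rl z (sbot R d).
Proof.
move=> haa hbb hab hee hae hbe E0 g0 h3 ha hb.
have hba : dotp b a = rc g by rewrite dotpC hab rc_conj.
have hea : dotp e a = 0 by rewrite dotpC hae conjC0.
have heb : dotp e b = 0 by rewrite dotpC hbe conjC0.
have Ag : g < A by lra.
have A2 : 0 < A ^+ 2 - g ^+ 2 by nra.
pose P := g * E / (A ^+ 2 - g ^+ 2).
pose S := (E - 2 * P * A) / g.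
have P0 : 0 <= P by apply: divr_ge0; nra.
have hSP : S - 2 * P = E * (A - 3 * g) / (g * (A - g)).
  rewrite /S /P; field.
  by rewrite (lt0r_neq0 g0) (lt0r_neq0 A2) lt0r_neq0 // subr_gt0.
have SP0 : 0 <= S - 2 * P by rewrite hSP; apply: divr_ge0; nra.
pose u1 := Num.sqrt (S + 2 * P). pose u2 := Num.sqrt (S - 2 * P).
have hu1 : u1 ^+ 2 = S + 2 * P by rewrite sqr_sqrtr //; lra.
have hu2 : u2 ^+ 2 = S - 2 * P by rewrite sqr_sqrtr.
pose x := (u1 + u2) / 2. pose y := (u1 - u2) / 2.
have hxy : x * y = P.
  have -> : x * y = (u1 ^+ 2 - u2 ^+ 2) / 4 by rewrite /x /y; field.
  by rewrite hu1 hu2; field.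
have hS : x ^+ 2 + y ^+ 2 = S.
  have -> : x ^+ 2 + y ^+ 2 = (u1 ^+ 2 + u2 ^+ 2) / 2 by rewrite /x /y; field.
  by rewrite hu1 hu2; field.
have hP : x * y * (A ^+ 2 - g ^+ 2) = g * E.
  by rewrite hxy /P; field; apply/lt0r_neq0.
have horth : 2 * (x * y) * A + g * (x ^+ 2 + y ^+ 2) - E = 0.
  by rewrite hxy hS /S; field; apply/lt0r_neq0.
pose n1 := rc x *: a + rc y *: b + e.
pose n2 := rc y *: a + rc x *: b - e.
have c1 : dotp a n1 = rc (x * A + y * g).
  by rewrite /n1; dexp; rewrite ?haa ?hab ?hae; rewrite /rc; ring.
have c2 : dotp n1 b = rc (x * g + y * A).
  by rewrite /n1; dexp; rewrite ?hab ?hbb ?heb; rewrite /rc; ring.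
have c3 : dotp n1 n1 = rc (x ^+ 2 * A + y ^+ 2 * A + 2 * x * y * g + E).
  by rewrite /n1; dexp; rewrite ?haa ?hab ?hba ?hbb ?hae ?hbe ?hea ?heb ?hee; rewrite /rc; ring.
have d1 : dotp a n2 = rc (y * A + x * g).
  by rewrite /n2; dexp; rewrite ?haa ?hab ?hae; rewrite /rc; ring.
have d2 : dotp n2 b = rc (y * g + x * A).
  by rewrite /n2; dexp; rewrite ?hab ?hbb ?heb; rewrite /rc; ring.
have d3 : dotp n2 n2 = rc (y ^+ 2 * A + x ^+ 2 * A + 2 * x * y * g + E).
  by rewrite /n2; dexp; rewrite ?haa ?hab ?hba ?hbb ?hae ?hbe ?hea ?heb ?hee; rewrite /rc; ring.
have o12 : dotp n1 n2 = rc (2 * (x * y) * A + g * (x ^+ 2 + y ^+ 2) - E).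
  by rewrite /n1 /n2; dexp; rewrite ?haa ?hab ?hba ?hbb ?hae ?hbe ?hea ?heb ?hee; rewrite /rc; ring.
have en1 : dotp e n1 = rc E.
  by rewrite /n1; dexp; rewrite ?hea ?heb ?hee; rewrite /rc; ring.
have en2 : dotp e n2 = - rc E.
  by rewrite /n2; dexp; rewrite ?hea ?heb ?hee; rewrite /rc; ring.
have En : rc E != 0 by rewrite rc_eq0; apply/lt0r_neq0.
have h1 : rl z (sline n1).
  apply: (cone (b := b)) ha hb.
    by apply: (nz_of_dotp (e := e)); rewrite en1.
  by rewrite hab c1 c2 c3 -!rcM; congr rc; nra.
have h2 : rl z (sline n2).
  apply: (cone (b := b)) ha hb.
    by apply: (nz_of_dotp (e := e)); rewrite en2 oppr_eq0.
  by rewrite hab d1 d2 d3 -!rcM; congr rc; nra.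
apply: line_orth_bot h1 h2.
by rewrite o12 horth rc0.
Qed.

Lemma RRN (N : nat) : forall (z : X) (a b e : vec) (A g E : R),
  dotp a a = rc A -> dotp b b = rc A -> dotp a b = rc g -> dotp e e = rc E ->
  dotp a e = 0 -> dotp b e = 0 -> 0 < A -> 0 < E -> 0 <= g ->
  (N%:R + 1) * g <= (N%:R - 1) * A ->
  rl z (sline a) -> rl z (sline b) -> rl z (sbot R d).
Proof.
elim: N => [|N IH] z a b e A g E haa hbb hab hee hae hbe A0 E0 g0 hN ha hb.
  by exfalso; move: hN; rewrite mulr0n add0r sub0r; lra.
move: hN; rewrite -natr1; set n := N%:R => hN.
have n0 : 0 <= n by apply: ler0n.
have [g00|gpos] : g = 0 \/ 0 < g by move: g0; rewrite le_eqVlt => /orP [/eqP ->|]; auto.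
  by apply: line_orth_bot ha hb; rewrite hab g00 rc0.
case: (ltP (3 * g) A) => h3.
  exact: (RR_small haa hbb hab hee hae hbe E0 gpos h3 ha hb).
have hba : dotp b a = rc g by rewrite dotpC hab rc_conj.
have hea : dotp e a = 0 by rewrite dotpC hae conjC0.
have heb : dotp e b = 0 by rewrite dotpC hbe conjC0.
have Ag : g < A by nra.
have gE : 0 < g * E by apply: mulr_gt0.
pose gam := Num.sqrt ((A ^+ 2 - g ^+ 2) / (g * E)).
have hgam : gam ^+ 2 = (A ^+ 2 - g ^+ 2) / (g * E).
  by rewrite sqr_sqrtr //; apply: divr_ge0; nra.
have hgam' : g * (gam ^+ 2 * E) = A ^+ 2 - g ^+ 2.
  by rewrite hgam; field; rewrite (lt0r_neq0 gpos) (lt0r_neq0 E0).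
have gam2 : 0 < gam ^+ 2 by rewrite hgam; apply: divr_gt0 => //; nra.
have gamnz : gam != 0 by apply/eqP => g1; move: gam2; rewrite g1 expr0n /= ltxx.
pose t := gam ^+ 2 * E.
have t0 : 0 < t by apply: mulr_gt0.
pose n1 := a + b + rc gam *: e.
pose n2 := a + b - rc gam *: e.
pose e' := a - b.
have c1 : dotp a n1 = rc (A + g).
  by rewrite /n1; dexp; rewrite ?haa ?hab ?hae; rewrite /rc; ring.
have c2 : dotp n1 b = rc (g + A).
  by rewrite /n1; dexp; rewrite ?hab ?hbb ?heb; rewrite /rc; ring.
have c3 : dotp n1 n1 = rc (2 * A + 2 * g + t).
  by rewrite /n1 /t; dexp; rewrite ?haa ?hab ?hba ?hbb ?hae ?hbe ?hea ?heb ?hee; rewrite /rc; ring.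
have d1 : dotp a n2 = rc (A + g).
  by rewrite /n2; dexp; rewrite ?haa ?hab ?hae; rewrite /rc; ring.
have d2 : dotp n2 b = rc (g + A).
  by rewrite /n2; dexp; rewrite ?hab ?hbb ?heb; rewrite /rc; ring.
have d3 : dotp n2 n2 = rc (2 * A + 2 * g + t).
  by rewrite /n2 /t; dexp; rewrite ?haa ?hab ?hba ?hbb ?hae ?hbe ?hea ?heb ?hee; rewrite /rc; ring.
have o12 : dotp n1 n2 = rc (2 * A + 2 * g - t).
  by rewrite /n1 /n2 /t; dexp; rewrite ?haa ?hab ?hba ?hbb ?hae ?hbe ?hea ?heb ?hee; rewrite /rc; ring.
have f1 : dotp n1 e' = 0.
  by rewrite /n1 /e'; dexp; rewrite ?haa ?hab ?hba ?hbb ?hae ?hbe ?hea ?heb ?hee; rewrite /rc; ring.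
have f2 : dotp n2 e' = 0.
  by rewrite /n2 /e'; dexp; rewrite ?haa ?hab ?hba ?hbb ?hae ?hbe ?hea ?heb ?hee; rewrite /rc; ring.
have f3 : dotp e' e' = rc (2 * A - 2 * g).
  by rewrite /e'; dexp; rewrite ?haa ?hab ?hba ?hbb; rewrite /rc; ring.
have en1 : dotp e n1 = rc (gam * E).
  by rewrite /n1; dexp; rewrite ?hea ?heb ?hee; rewrite /rc; ring.
have en2 : dotp e n2 = - rc (gam * E).
  by rewrite /n2; dexp; rewrite ?hea ?heb ?hee; rewrite /rc; ring.
have gEnz : rc (gam * E) != 0 by rewrite rc_eq0 mulf_neq0 // (lt0r_neq0 E0).
have h1 : rl z (sline n1).
  apply: (cone (b := b)) ha hb.
    by apply: (nz_of_dotp (e := e)); rewrite en1.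
  by rewrite hab c1 c2 c3 -!rcM; congr rc; rewrite /t; nra.
have h2 : rl z (sline n2).
  apply: (cone (b := b)) ha hb.
    by apply: (nz_of_dotp (e := e)); rewrite en2 oppr_eq0.
  by rewrite hab d1 d2 d3 -!rcM; congr rc; rewrite /t; nra.
have hgt : g * t = A ^+ 2 - g ^+ 2 by exact: hgam'.
have hgg : g * (2 * A + 2 * g - t) = (3 * g - A) * (g + A) by nra.
have g'0 : 0 <= 2 * A + 2 * g - t.
  have : 0 <= g * (2 * A + 2 * g - t) by rewrite hgg; apply: mulr_ge0; lra.
  by rewrite pmulr_rge0.
have key : g * ((n - 1) * (2 * A + 2 * g + t) - (n + 1) * (2 * A + 2 * g - t))
           = 2 * (A + g) * (n * A - (n + 2) * g).
  have ht : n * (g * t) = n * (A ^+ 2 - g ^+ 2) by rewrite hgt.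
  nra.
have K : 0 <= 2 * (A + g) * (n * A - (n + 2) * g) by apply: mulr_ge0; nra.
rewrite -key pmulr_rge0 // in K.
apply: (IH z n1 n2 e' (2 * A + 2 * g + t) (2 * A + 2 * g - t) (2 * A - 2 * g)) => //.
all: lra.
Qed.

Lemma rc_pos (x : vec) (r : R) : x != 0 -> dotp x x = rc r -> 0 <= r -> 0 < r.
Proof.
move=> xnz h r0; rewrite lt_def r0 andbT; apply/eqP => r00; move/eqP: xnz; apply.
by apply: dotp_eq0; rewrite h r00 rc0.
Qed.

Lemma RR (hd : (3 <= d)%N) (z : X) (u v : vec) :
  rl z (sline u) -> rl z (sline v) ->
  (forall w, sline u w -> sline v w -> w = 0) -> rl z (sbot R d).
Proof.
move=> hu hv hm.
have [u0|unz] := eqVneq u 0.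
  by apply: weak hu => w /= [c ->]; rewrite u0 scaler0.
have [v0|vnz] := eqVneq v 0.
  by apply: weak hv => w /= [c ->]; rewrite v0 scaler0.
set g0 := dotp u v.
have [g00|g0nz] := eqVneq g0 0.
  by apply: line_orth_bot hu hv.
have [e [enz hue hve]] := exists_perp u v hd.
have [Ar [hA Ar0]] := rc_ge0 (dotp_ge0 u).
have [Br [hB Br0]] := rc_ge0 (dotp_ge0 v).
have [Er [hE Er0]] := rc_ge0 (dotp_ge0 e).
have [Gr [hG Gr0]] := rc_ge0 (mul_conjC_ge0 g0).
have Ap := rc_pos unz hA Ar0.
have Bp := rc_pos vnz hB Br0.
have Ep := rc_pos enz hE Er0.
have Gp : 0 < Gr.
  rewrite lt_def Gr0 andbT; apply/eqP => G00; move/eqP: g0nz; apply.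
  by apply/eqP; rewrite -mul_conjC_eq0 hG G00 rc0.
pose lam := Num.sqrt (Ar / (Gr * Br)).
have hlam : lam ^+ 2 = Ar / (Gr * Br) by rewrite sqr_sqrtr // divr_ge0 // mulr_ge0.
have lamp : 0 < lam by rewrite sqrtr_gt0 divr_gt0 // mulr_gt0.
pose mu := g0^* * rc lam.
have munz : mu != 0.
  by rewrite mulf_neq0 // ?conjC_eq0 // rc_eq0 (lt0r_neq0 lamp).
pose b := mu *: v.
have hmuc : mu^* = g0 * rc lam by rewrite /mu rmorphM /= conjCK rc_conj.
have hub : dotp u b = rc (Gr * lam).
  by rewrite /b dotpZr /mu -/g0 mulrC mulrA hG rcM.
have hbb : dotp b b = rc Ar.
  rewrite /b dotpZl dotpZr hmuc hB /mu.
  have -> : g0 * rc lam * (g0^* * rc lam * rc Br) = (g0 * g0^*) * rc (lam ^+ 2 * Br).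
    by rewrite /rc; ring.
  rewrite hG -rcM hlam; congr rc; field.
  by rewrite (lt0r_neq0 Gp) (lt0r_neq0 Bp).
have hbe : dotp b e = 0 by rewrite /b dotpZl hve mulr0.
have hb : rl z (sline b).
  apply: weak hv => w /= [c ->]; exists (c / mu).
  by rewrite /b scalerA divfK.
have bvm : b = mu *: v by [].
clearbody b.
set g := Gr * lam.
have gge0 : 0 <= g by rewrite mulr_ge0 // ltW.
have hbu : dotp b u = rc g by rewrite dotpC hub rc_conj.
move: hub; rewrite -/g => hub.
clearbody g.
have gA : g < Ar.
  rewrite ltNge; apply/negP => Ag.
  pose w := rc Ar *: b - rc g *: u.
  have hww : dotp w w = rc (Ar * (Ar ^+ 2 - g ^+ 2)).
    by rewrite /w; dexp; rewrite hbb hbu hub hA; rewrite /rc; ring.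
  have w0 : w = 0.
    apply: dotp_eq0; rewrite hww -rc0; congr rc.
    have : 0 <= rc (Ar * (Ar ^+ 2 - g ^+ 2)) by rewrite -hww dotp_ge0.
    rewrite /rc ler0c => h.
    have h2 : Ar ^+ 2 <= g ^+ 2 by nra.
    nra.
  have e1 : rc Ar *: b = rc g *: u by apply/eqP; rewrite -subr_eq0; apply/eqP; exact: w0.
  have bu : b = ((rc Ar)^-1 * rc g) *: u.
    by rewrite -scalerA -e1 scalerA mulVf ?scale1r // rc_eq0 (lt0r_neq0 Ap).
  have b0 : b = 0.
    apply: hm; first by exists ((rc Ar)^-1 * rc g).
    by exists mu; rewrite bvm.
  by move/eqP: b0; rewrite bvm scaler_eq0 (negPf munz) (negPf vnz).
pose x0 := (Ar + g) / (Ar - g).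
have x00 : 0 <= x0 by rewrite divr_ge0 //; lra.
have hN := archi_boundP x00.
set N := Num.Def.archi_bound x0 in hN.
have hN' : Ar + g < N%:R * (Ar - g) by rewrite -ltr_pdivrMr // subr_gt0.
apply: (RRN (N := N) (e := e) hA hbb hub hE hue hbe Ap Ep gge0) => //.
nra.
Qed.

Lemma gen_step (Q : subspace -> Prop)
  (hQ : forall b q, Q b -> Q (sasaki b q))
  (H : forall (z : X) (u : vec) (b : subspace), Q b -> rl z (sline u) -> rl z b ->
        (forall w, sline u w -> b w -> w = 0) -> rl z (sbot R d)) :
  forall (L : seq vec) (z : X) (b : subspace), porth L -> Q b ->
    rl z (sspan L) -> rl z b -> (forall w, inspan L w -> b w -> w = 0) -> rl z (sbot R d).
Proof.
elim=> [|u L IH] z b hL hQb ha hb hm.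
  by apply: weak ha => w /= ->.
move: hL; rewrite /porth /= => /andP [hu hL].
pose T := sspan (u :: L).
pose q := sjoin (sline u) (sperp T).
have qperpT : forall x, sperp q x -> T x.
  move=> x hx; apply: perpperp => w hw; apply: hx; exists 0, w; split => //.
  - by apply: (ss0 (sline u)).
  - by rewrite add0r.
have qperpu : forall x, sperp q x -> dotp u x = 0.
  move=> x hx; apply: hx; exists u, 0; split.
  - by exists 1; rewrite scale1r.
  - by apply: ss0.
  - by rewrite addr0.
have uT : T u := inspan_mem (mem_head u L).
have i1 : forall v, sasaki T q v -> sline u v.
  move=> v [vq [s [h [hs hh ev]]]].
  have vT : T v by rewrite ev; apply: ssD => //; exact: qperpT.
  case: vq => [a0 [t [[c ea] ht ev']]].
  have tT : T t.
    have -> : t = v - c *: u by rewrite ev' ea addrAC subrr add0r.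
    by apply: ssB => //; apply: ssZ.
  have t0 := perp_self tT ht.
  by exists c; rewrite ev' t0 addr0 ea.
have i2 : forall w, sline u w -> sasaki b q w -> w = 0.
  move=> w [c ew0] [wq [s [b0 [hs hb0 ew]]]].
  have sT := qperpT _ hs.
  have b0T : T b0.
    have -> : b0 = c *: u - s by rewrite -ew0 ew addrAC subrr add0r.
    by apply: ssB => //; apply: ssZ.
  have b00 := hm _ b0T hb0.
  have ws : w = s by rewrite ew b00 addr0.
  apply: (perp_self (S := q)) => //.
  by rewrite ws.
pose w := pi_fun q z.
have h1 : rl w (sline u).
  have : rl w (sasaki T q) by apply: (ax_pi_i hM).
  by apply: weak => v; exact: i1.
have h2 : rl w (sasaki b q) by apply: (ax_pi_i hM).
have hbot := H w u (sasaki b q) (hQ b q hQb) h1 h2 i2.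
have hz : rl z (sperp q) := ax_pi_bot hM hbot.
have huL : orthL L u.
  move=> x hx; move/allP: hu => /(_ x hx) /eqP h.
  by rewrite dotpC h conjC0.
have hz' : rl z (sspan L).
  apply: weak hz => x hx.
  have [c hc] : T x := qperpT _ hx.
  have h0 : dotp u (x - c *: u) = 0.
    by rewrite dotpC (orthL_span huL hc) conjC0.
  have : dotp u x = c * dotp u u.
    have -> : x = (x - c *: u) + c *: u by rewrite subrK.
    by rewrite dotpDr h0 add0r dotpZr.
  rewrite (qperpu _ hx) => /esym /eqP; rewrite mulf_eq0 => /orP [/eqP c0|/eqP uu0].
    by move: hc; rewrite c0 scale0r subr0.
  by move: hc; rewrite (dotp_eq0 uu0) scaler0 subr0.
apply: (IH z b hL hQb hz' hb) => x hx hbx; apply: hm hbx.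
by exists 0; rewrite scale0r subr0.
Qed.

Lemma sasaki_isline (v : vec) (q : subspace) : exists v', sasaki (sline v) q = sline v'.
Proof.
have [s [t [hs ht ev]]] := sdecomp q v.
exists s; apply: subspace_ext => x; split.
  move=> [xq [s' [y [hs' [c ey] ex]]]].
  exists c; apply/eqP; rewrite -subr_eq0; apply/eqP.
  apply: (perp_self (S := q)); first by apply: ssB => //; apply: ssZ.
  have -> : x - c *: s = s' + c *: t by rewrite ex ey ev scalerDr (addrC (c *: s)) addrA addrK.
  apply: ssD => //; exact: (ssZ (p := sperp q)).
move=> [c ->]; split; first by apply: ssZ.
exists (- (c *: t)), (c *: v); split.
- by apply: ssN; apply: (ssZ (p := sperp q)).
- by exists c.
- by rewrite ev scalerDr (addrC (c *: s)) addKr.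
Qed.

Lemma line_any (hd : (3 <= d)%N) (z : X) (u : vec) (b : subspace) :
  rl z (sline u) -> rl z b -> (forall w, sline u w -> b w -> w = 0) -> rl z (sbot R d).
Proof.
move=> hu hb hm.
have [Lb [hLb eLb]] := fin_span b.
have LB := @gen_step (fun b => exists v, b = sline v)
  (fun b q '(ex_intro v e) => ltac:(rewrite e; exact: sasaki_isline))
  (fun z u b '(ex_intro v e) h1 h2 h3 => ltac:(subst b; exact: (RR hd h1 h2 h3))).
apply: (LB Lb z (sline u) hLb (ex_intro _ u erefl)).
- by apply: weak hb => w /eLb.
- exact: hu.
- by move=> w /eLb hw hu'; apply: hm.
Qed.

Lemma meet0_gen (hd : (3 <= d)%N) (z : X) (a b : subspace) :
  rl z a -> rl z b -> (forall w, a w -> b w -> w = 0) -> rl z (sbot R d).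
Proof.
move=> ha hb hm.
have [La [hLa eLa]] := fin_span a.
apply: (@gen_step (fun _ => True) (fun _ _ _ => I)
  (fun z u b _ h1 h2 h3 => line_any hd h1 h2 h3) La z b hLa I) => //.
- by apply: weak ha => w /eLa.
- by move=> w /eLa hw hbw; apply: hm.
Qed.

Lemma meet_gen (hd : (3 <= d)%N) (y : X) (a b : subspace) :
  rl y a -> rl y b -> rl y (smeet a b).
Proof.
move=> ha hb.
pose c := smeet a b; pose p := sperp c.
have h1 : rl (pi_fun p y) (sasaki a p) by apply: (ax_pi_i hM).
have h2 : rl (pi_fun p y) (sasaki b p) by apply: (ax_pi_i hM).
have hbot : rl (pi_fun p y) (sbot R d).
  apply: (meet0_gen hd h1 h2) => x [xp [s1 [a0 [hs1 ha0 ex]]]] [_ [s2 [b0 [hs2 hb0 ex2]]]].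
  have [s1a _] : c s1 := perpperp hs1.
  have [_ s2b] : c s2 := perpperp hs2.
  apply: (perp_self (S := c)) => //; split.
  - by rewrite ex; apply: ssD.
  - by rewrite ex2; apply: ssD.
have := ax_pi_bot hM hbot; apply: weak => v; exact: perpperp.
Qed.
End PQ.

Section Hilb.
Variables (R : realType) (d : nat).
Local Notation subspace := (subspace R d).

Lemma hilb_pi (X q p : subspace) :
  sle X (sjoin (sperp q) (smeet p q)) -> sle (sasaki X q) p.
Proof.
move=> h v [vq [s [x [hs hx ev]]]].
have [s' [m [hs' [pm qm] ex]]] := h x hx.
have : v - m = 0.
  apply: (perp_self (S := q)); first by apply: ssB.
  have -> : v - m = s + s' by rewrite ev ex addrA addrK.
  exact: ssD.
by move/eqP; rewrite subr_eq0 => /eqP ->.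
Qed.

Lemma hilb_u (U : unitary R d) (Y p : subspace) :
  sle Y (simage (uinv U) p) -> sle (simage U Y) p.
Proof.
move=> h v [y [hy ->]].
have [w [pw ->]] := h y hy.
case: U {h hy} => U [h1 h2] /=.
by rewrite mulmxA h2 mul1mx.
Qed.

Fixpoint pb (t : term R d) (p : subspace) : subspace :=
  match t with
  | TVar => p
  | TU U t' => pb t' (simage (uinv U) p)
  | TPi q t' => pb t' (sjoin (sperp q) (smeet p q))
  end.

Lemma H_pb (t : term R d) (p Y : subspace) :
  sle Y (pb t p) -> sle (@eval_term _ _ (Hilbert_model R d) t Y) p.
Proof.
elim: t p => [|U t IH|q t IH] p /= h //.
  by apply: hilb_u; apply: IH.
by apply: hilb_pi; apply: IH.
Qed.

Definition Kof (phi : conj_formula R d) : subspace :=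
  foldr (fun l acc => match l with LPos t p => smeet (pb t p) acc | LNeg _ _ => acc end)
    (stop R d) phi.

Lemma K_le (phi : conj_formula R d) t p :
  List.In (LPos t p) phi -> sle (Kof phi) (pb t p).
Proof.
elim: phi => [//|l phi IH] /= [->|hin] v /=.
  by case.
case: l => [t' p'|t' p'] /=; last by apply: IH.
by case=> _; apply: IH.
Qed.
End Hilb.

Section MainS.
Variables (R : realType) (d : nat) (M : structure R d) (hM : PQM M) (hd : (3 <= d)%N).
Local Notation vec := (vec R d).
Local Notation subspace := (subspace R d).
Local Notation X := (carrier M).
Local Notation rl := Pilot.Defs.rel.

Lemma pb_pi (w : X) (q p : subspace) :
  rl (pi_fun q w) p -> rl w (sjoin (sperp q) (smeet p q)).
Proof.
move=> hp.
pose y := pi_fun q w.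
have hq : rl y q.
  have : rl y (sasaki (stop R d) q) by apply: (ax_pi_i hM); apply: (ax_top hM).
  by apply: weak => // v [].
pose r' := smeet p q.
have hr : rl y r' := meet_gen hM hd hp hq.
pose a := smeet q (sperp r').
have h1 : rl (pi_fun a y) (sasaki r' a) by apply: (ax_pi_i hM).
have h2 : rl (pi_fun a y) (sbot R d).
  apply: weak h1 => // x [xa [s [r0 [hs hr0 ex]]]] /=.
  apply: dotp_eq0.
  have e1 : dotp x s = 0 by apply: hs.
  have e2 : dotp x r0 = 0 by rewrite dotpC (xa.2 r0 hr0) conjC0.
  by rewrite {2}ex dotpDr e1 e2 addr0.
have h3 : rl (pi_fun a w) (sbot R d).
  by apply: (ax_pi_c hM _ h2) => v [].
have h4 := ax_pi_bot hM h3.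
apply: weak h4 => // v hv.
have [v1 [v2 [hv1 hv2 ev]]] := sdecomp q v.
have [s [t [hs ht ev1]]] := sdecomp r' v1.
have tq : q t.
  have -> : t = v1 - s by rewrite ev1 addrAC subrr add0r.
  by apply: ssB => //; case: hs.
have ta : a t by split.
have : dotp t t = 0.
  have e0 : dotp t v = 0 by apply: hv.
  have e1 : dotp t s = 0 by rewrite dotpC ht // conjC0.
  have e2 : dotp t v2 = 0 by apply: hv2.
  by move: e0; rewrite ev ev1 !dotpDr e1 e2 add0r addr0.
move/dotp_eq0 => t0.
exists v2, s; split => //.
by rewrite ev ev1 t0 addr0 addrC.
Qed.

Lemma M_pb (t : term R d) (p : subspace) (x : X) :
  rl (eval_term t x) p -> rl x (pb t p).
Proof.
elim: t p => [|U t IH|q t IH] p /= h //.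
  by apply: IH; apply: (ax_u_e hM).
by apply: IH; apply: pb_pi.
Qed.

Lemma push (t : term R d) (x : X) (Y : subspace) :
  rl x Y -> rl (eval_term t x) (@eval_term _ _ (Hilbert_model R d) t Y).
Proof.
elim: t => [|U t IH|q t IH] h //=.
  by apply: (ax_u_i hM); apply: IH.
by apply: (ax_pi_i hM); apply: IH.
Qed.

Lemma M_K (phi : conj_formula R d) (x : X) : sat_conj phi x -> rl x (Kof phi).
Proof.
elim: phi => [|l phi IH] h /=; first exact: (ax_top hM).
have h' : sat_conj phi x by move=> l' hl'; apply: h; right.
case: l h => [t p|t p] h; last exact: IH.
apply: (meet_gen hM hd); last exact: IH.
by apply: M_pb; apply: (h (LPos t p)); left.
Qed.
End MainS.

Theorem mainTheorem12 (R : realType) (d : nat) (hd : (3 <= d)%N)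
  (M : structure R d) (hM : PQM M) (phi : conj_formula R d) :
  sat_exists M phi -> sat_exists (Hilbert_model R d) phi.
Proof.
case=> x hx; exists (Kof phi) => l hl.
case: l hl => t p hl /=.
  exact: H_pb (K_le hl).
move=> hle; apply: (hx _ hl) => /=.
apply: (weak hM _ (push hM t (M_K hM hd hx))) => v hv; exact: hle.
Qed.
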